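(* Let $R$ be a commutative ring with identity and let $\boldsymbol{a}=(a_0,a_1,a_2,\dots)\in H_R$ with $a_0\in R^*$. Then $\lambda_{+,0}(\boldsymbol{a})=(0,a_0,a_1,\dots)$ is invertible with respect to $\circ$, and $$\boldsymbol{a}^{-1}=\lambda_{-}\big(\lambda_{+,0}(\boldsymbol{a})^{(-1)}\big)\circ\lambda_{+,0}(\boldsymbol{a}),$$ where $\boldsymbol{a}^{-1}$ is the inverse of $\boldsymbol{a}$ for the Hurwitz product and $\boldsymbol{c}^{(-1)}$ denotes the inverse of $\boldsymbol{c}$ for $\circ$.
   Context: $R^*$ is the group of units of $R$. $H_R$ is the set of sequences $\boldsymbol{a}=(a_n)_{n\ge0}$ with $a_n\in R$; we write $\boldsymbol{a}[n]=a_n$. The Hurwitz product is $(\boldsymbol{a}\star\boldsymbol{b})_n=\sum_{h=0}^n\binom{n}{h}a_hb_{n-h}$, with identity $\bar{\boldsymbol{1}}=(1,0,0,\dots)$; $\boldsymbol{a}$ is $\star$-invertible iff $a_0\in R^*$, and $\boldsymbol{a}^{-1}$ denotes its $\star$-inverse. The exponential partial Bell polynomials are $Y_{0,0}=1$, $Y_{n,0}=0$ ($n\ge1$), $Y_{0,k}=0$ ($k\ge1$), and $Y_{n,k}(y_1,y_2,\dots)=\sum \frac{n!}{\prod_i j_i!\,(i!)^{j_i}}\prod_i y_i^{j_i}$, the sum over $(j_1,j_2,\dots)$ of nonnegative integers with $\sum_i j_i=k$, $\sum_i ij_i=n$ (integer coefficients). For $\boldsymbol{a}\in H_R$ and $\boldsymbol{b}\in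 H_R$ with $b_0=0$, the composition product is $(\boldsymbol{a}\circ\boldsymbol{b})_n=\sum_{k=0}^n a_k Y_{n,k}(b_1,\dots,b_{n-k+1})$ (when $\mathbb{Q}\subseteq R$ this is the sequence whose exponential generating function $\sum_n c_nt^n/n!$ is $A(B(t))$, $A,B$ the e.g.f.s of $\boldsymbol a,\boldsymbol b$). Its identity is $\boldsymbol{1}=(0,1,0,0,\dots)$; $\boldsymbol{b}$ is $\circ$-invertible iff $b_0=0$ and $b_1\in R^*$. The shift is $\lambda_-(a_0,a_1,a_2,\dots)=(a_1,a_2,\dots)$ and $\lambda_{+,0}(a_0,a_1,\dots)=(0,a_0,a_1,\dots)$. *)

(* Defs.v *)
From HB Require Import structures.
From mathcomp Require Import all_boot all_order all_algebra.
Set Implicit Arguments. Unset Strict Implicit. Unset Printing Implicit Defensive.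
Import GRing.Theory.
Local Open Scope ring_scope.

(* Elements of H_R are sequences a : nat -> R, with a[n] = a n. *)

Definition hmul (R : comPzRingType) (a b : nat -> R) : nat -> R :=
  fun n => \sum_(h < n.+1) ('C(n, h))%:R * a h * b (n - h)%N.

Definition hid (R : comPzRingType) : nat -> R := fun n => (n == 0)%N%:R.

(* exponential partial Bell polynomial Y_{n,k}(y_1, y_2, ...):
   sum over (j_1,...,j_n) (j_i stored at index i-1) with sum j_i = k and
   sum i*j_i = n, of n!/(prod j_i! (i!)^{j_i}) * prod y_i^{j_i}. *)
Definition bell (R : comPzRingType) (n k : nat) (y : nat -> R) : R :=
  \sum_(j : {ffun 'I_n -> 'I_n.+1} |
          ((\sum_(i < n) (j i : nat)) == k)%N &&
          ((\sum_(i < n) (i.+1 * j i)) == n)%N)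
     ((n`! %/ \prod_(i < n) ((j i)`! * (i.+1)`! ^ (j i)))%N)%:R
       * \prod_(i < n) y i.+1 ^+ (j i).

Definition ccomp (R : comPzRingType) (a b : nat -> R) : nat -> R :=
  fun n => \sum_(k < n.+1) a k * bell n k b.

Definition cid (R : comPzRingType) : nat -> R := fun n => (n == 1)%N%:R.

Definition lminus (R : comPzRingType) (a : nat -> R) : nat -> R := fun n => a n.+1.
Definition lplus0 (R : comPzRingType) (a : nat -> R) : nat -> R :=
  fun n => if n is m.+1 then a m else 0.

(* Main.v *)
Require Import Defs.
From HB Require Import structures.
From mathcomp Require Import all_boot all_order all_algebra.
From mathcomp Require Import zify ring.
From Stdlib Require Import FunctionalExtensionality.
Set Implicit Arguments. Unset Strict Implicit. Unset Printing Implicit Defensive.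
Import GRing.Theory.

Definition Sf N (f : nat -> nat) := \sum_(t < N) f t.
Definition Tf N (f : nat -> nat) := \sum_(t < N) t.+1 * f t.
Definition Df N (f : nat -> nat) := \prod_(t < N) ((f t)`! * (t.+1)`! ^ f t).
Definition addi (f : nat -> nat) i := fun t => f t + (t == i).
Definition subi (f : nat -> nat) i := fun t => f t - (t == i).

Lemma sum_ind N (g : nat -> nat) i : i < N -> \sum_(t < N) g t * (t == i :> nat) = g i.
Proof.
move=> iN; rewrite (bigD1 (Ordinal iN)) //= eqxx muln1 big1 ?addn0 // => t.
by rewrite -val_eqE /= => /negbTE ->; rewrite muln0.
Qed.

Lemma Sf_addi N f i : i < N -> Sf N (addi f i) = Sf N f + 1.
Proof.
move=> iN; rewrite /Sf /addi big_split /=; congr (_ + _).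
have := sum_ind (fun _ => 1) iN; rewrite /= => <-.
by apply eq_bigr => t _; rewrite mul1n.
Qed.

Lemma Tf_addi N f i : i < N -> Tf N (addi f i) = Tf N f + i.+1.
Proof.
move=> iN; rewrite /Tf /addi; under eq_bigr do rewrite mulnDr.
by rewrite big_split /= (sum_ind (fun t => t.+1) iN).
Qed.

Lemma Df_addi N f i : i < N -> Df N (addi f i) = Df N f * ((f i).+1 * (i.+1)`!).
Proof.
move=> iN; rewrite /Df /addi (bigD1 (Ordinal iN)) //= [in RHS](bigD1 (Ordinal iN)) //=.
rewrite eqxx addn1 factS expnS.
rewrite (eq_bigr (fun t : 'I_N => (f t)`! * (t.+1)`! ^ f t)); last first.
  by move=> t; rewrite -val_eqE /= => /negbTE ->; rewrite addn0.
ring.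
Qed.

Lemma addi_subi f i : 0 < f i -> addi (subi f i) i = f.
Proof.
move=> fi; apply functional_extensionality => t; rewrite /addi /subi.
by case: eqP => [->|]; rewrite ?subn0 ?addn0 // subnK.
Qed.

Lemma subi_addi f i : subi (addi f i) i = f.
Proof. by apply functional_extensionality => t; rewrite /addi /subi addnK. Qed.

Lemma Tf_ge N f t : t < N -> t.+1 * f t <= Tf N f.
Proof. by move=> tN; rewrite /Tf (bigD1 (Ordinal tN)) //= leq_addr. Qed.

Lemma Df0 N f : Tf N f = 0 -> Df N f = 1.
Proof.
move=> H; apply big1 => t _; have := Tf_ge f (ltn_ord t); rewrite H.
by rewrite leqn0 muln_eq0 /= => /eqP ->.
Qed.

Lemma fact_expand N f m : Tf N f = m.+1 ->
  m.+1`! = \sum_(t < N) m`! * (t.+1 * f t).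
Proof. by move=> H; rewrite -big_distrr /= -/(Tf N f) H factS mulnC. Qed.

Lemma term_eq m t x : t <= m ->
  m`! * (t.+1 * x) = 'C(m, t) * (m - t)`! * (x * (t.+1)`!).
Proof.
move=> tm; rewrite -(bin_fact tm) factS; ring.
Qed.

Lemma Df_div N n f : Tf N f = n -> Df N f %| n`!.
Proof.
elim/ltn_ind: n f => n IH f Hf.
case: n IH Hf => [|m] IH Hf; first by rewrite Df0.
rewrite (fact_expand Hf) dvdn_sum // => t _.
case: (posnP (f t)) => [->|ft]; first by rewrite !muln0 dvdn0.
have tN := ltn_ord t.
set g := subi f t.
have Hfg : f = addi g t by rewrite addi_subi.
have HT : Tf N g + t.+1 = m.+1 by rewrite -Tf_addi // -Hfg.
have tm : t <= m by lia.
rewrite Hfg Df_addi // term_eq //.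
have -> : (addi g t) t = (g t).+1 by rewrite /addi eqxx addn1.
apply: dvdn_mul; last exact: dvdnn.
apply: dvdn_mull; apply: IH; lia.
Qed.

Lemma term_div N m f (t : 'I_N) : Tf N f = m.+1 -> Df N f %| m`! * (t.+1 * f t).
Proof.
move=> Hf.
case: (posnP (f t)) => [->|ft]; first by rewrite !muln0 dvdn0.
have tN := ltn_ord t.
set g := subi f t.
have Hfg : f = addi g t by rewrite addi_subi.
have HT : Tf N g + t.+1 = m.+1 by rewrite -Tf_addi // -Hfg.
have tm : t <= m by lia.
rewrite Hfg Df_addi // term_eq //.
have -> : (addi g t) t = (g t).+1 by rewrite /addi eqxx addn1.
apply: dvdn_mul; last exact: dvdnn.
apply: dvdn_mull; apply: Df_div; lia.
Qed.

Lemma divn_sumE (I : finType) (F : I -> nat) d :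
  (forall i, d %| F i) -> (\sum_i F i) %/ d = \sum_i (F i %/ d).
Proof.
move=> H; rewrite unlock; elim: (index_enum I) => [|x s IHs] /=; first by rewrite div0n.
by rewrite divnDl // IHs.
Qed.

Lemma wid N m f : Tf N f = m.+1 ->
  m.+1`! %/ Df N f = \sum_(t < N) (if 0 < f t then 'C(m, t) * ((m - t)`! %/ Df N (subi f t)) else 0).
Proof.
move=> Hf; rewrite (fact_expand Hf) divn_sumE; last first.
  by move=> t; apply: term_div.
apply eq_bigr => t _.
case: (posnP (f t)) => [->|ft]; first by rewrite !muln0 div0n.
have tN := ltn_ord t.
set g := subi f t.
have Hfg : f = addi g t by rewrite addi_subi.
have HT : Tf N g + t.+1 = m.+1 by rewrite -Tf_addi // -Hfg.
have tm : t <= m by lia.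
rewrite {1 2}Hfg Df_addi // term_eq //.
have -> : (addi g t) t = (g t).+1 by rewrite /addi eqxx addn1.
rewrite divnMr; last by rewrite muln_gt0 fact_gt0.
rewrite muln_divA //; apply: Df_div; lia.
Qed.

Definition rep N (j : {ffun 'I_N -> 'I_N.+1}) (t : nat) : nat :=
  match (insub t : option 'I_N) with Some i => nat_of_ord (j i) | None => 0 end.

Definition mkf N (f : nat -> nat) : {ffun 'I_N -> 'I_N.+1} :=
  [ffun t : 'I_N => inord (f t)].

Lemma rep_ord N (j : {ffun 'I_N -> 'I_N.+1}) (i : 'I_N) : rep j i = j i.
Proof. by rewrite /rep valK. Qed.

Lemma rep_ge N (j : {ffun 'I_N -> 'I_N.+1}) t : N <= t -> rep j t = 0.
Proof. by move=> H; rewrite /rep insubN // -leqNgt. Qed.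

Lemma rep_le N (j : {ffun 'I_N -> 'I_N.+1}) t : rep j t <= N.
Proof. rewrite /rep; case: insub => [i|] //; by rewrite -ltnS ltn_ord. Qed.

Lemma rep_mkf N f t : t < N -> rep (mkf N f) t = if f t <= N then f t else 0.
Proof. by move=> tN; rewrite /rep (@insubT _ (fun x => (x < N)%N) _ t tN) /mkf ffunE /inord val_insubd. Qed.

Lemma rep_inj N (j1 j2 : {ffun 'I_N -> 'I_N.+1}) :
  (forall t, t < N -> rep j1 t = rep j2 t) -> j1 = j2.
Proof.
move=> H; apply/ffunP => i; apply/val_inj => /=; rewrite -!rep_ord; exact: H.
Qed.

Lemma mkf_rep N (j : {ffun 'I_N -> 'I_N.+1}) : mkf N (rep j) = j.
Proof. by apply rep_inj => t tN; rewrite rep_mkf // rep_le. Qed.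

Lemma rep_mkf_id N f : (forall t, t < N -> f t <= N) -> (forall t, N <= t -> f t = 0) ->
  rep (mkf N f) = f.
Proof.
move=> H1 H2; apply functional_extensionality => t.
case: (ltnP t N) => [lt|ge]; first by rewrite rep_mkf // H1.
by rewrite rep_ge // H2.
Qed.

Lemma Sf_S N f : f N = 0 -> Sf N.+1 f = Sf N f.
Proof. by move=> H; rewrite /Sf big_ord_recr /= H addn0. Qed.
Lemma Tf_S N f : f N = 0 -> Tf N.+1 f = Tf N f.
Proof. by move=> H; rewrite /Tf big_ord_recr /= H muln0 addn0. Qed.
Lemma Df_S N f : f N = 0 -> Df N.+1 f = Df N f.
Proof. by move=> H; rewrite /Df big_ord_recr /= H fact0 expn0 !muln1. Qed.

Section Ring.
Variable R : comPzRingType.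
Local Open Scope ring_scope.

Definition Pf N (f : nat -> nat) (y : nat -> R) := \prod_(t < N) y t.+1 ^+ f t.

Lemma Pf_S N f y : f N = 0%N -> Pf N.+1 f y = Pf N f y.
Proof. by move=> H; rewrite /Pf big_ord_recr /= H expr0 mulr1. Qed.

Lemma Pf_addi N f i y : (i < N)%N -> Pf N (addi f i) y = Pf N f y * y i.+1.
Proof.
move=> iN; rewrite /Pf /addi (bigD1 (Ordinal iN)) //= [in RHS](bigD1 (Ordinal iN)) //=.
rewrite eqxx addn1 exprS.
rewrite (eq_bigr (fun t : 'I_N => y t.+1 ^+ f t)); last first.
  by move=> t; rewrite -val_eqE /= => /negbTE ->; rewrite addn0.
ring.
Qed.

Definition bellN N n k (y : nat -> R) : R :=
  \sum_(j : {ffun 'I_N -> 'I_N.+1} | (Sf N (rep j) == k) && (Tf N (rep j) == n))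
     (n`! %/ Df N (rep j))%:R * Pf N (rep j) y.

Lemma bell_bellN n k y : bell n k y = bellN n n k y.
Proof.
rewrite /bell /bellN; apply eq_big => [j|j _].
  have E1 : (\sum_(i < n) j i)%N = (\sum_(t < n) rep j t)%N by apply eq_bigr => i _; rewrite rep_ord.
  have E2 : (\sum_(i < n) i.+1 * j i)%N = (\sum_(t < n) t.+1 * rep j t)%N by apply eq_bigr => i _; rewrite rep_ord.
  by rewrite /Sf /Tf E1 E2.
have E1 : (\prod_(i < n) ((j i)`! * (i.+1)`! ^ j i))%N = Df n (rep j) by apply eq_bigr => i _; rewrite rep_ord.
have E2 : \prod_(i < n) y i.+1 ^+ j i = Pf n (rep j) y by apply eq_bigr => i _; rewrite rep_ord.
by rewrite E1 E2.
Qed.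

Lemma bellN_S M m k y : (m <= M)%N -> bellN M m k y = bellN M.+1 m k y.
Proof.
move=> mM; symmetry; rewrite /bellN.
rewrite (reindex_onto (fun j => mkf M.+1 (rep j)) (fun J => mkf M (rep J))) /=; last first.
  move=> J /andP [_ /eqP HT].
  have bnd : forall t, (t < M.+1)%N -> (t.+1 * rep J t <= m)%N by move=> t tM; rewrite -HT Tf_ge.
  apply rep_inj => t tM; rewrite rep_mkf // ifT; last exact: leq_trans (rep_le _ _) (leqnSn _).
  case: (ltnP t M) => [lt|ge]; first by rewrite rep_mkf // ifT //; have := bnd t tM; nia.
  rewrite rep_ge //; have := bnd t tM; have -> : t = M by lia. nia.
have E : forall j : {ffun 'I_M -> 'I_M.+1}, rep (mkf M.+1 (rep j)) = rep j.
  by move=> j; apply rep_mkf_id => [t _|t tM]; [rewrite (leq_trans (rep_le _ _)) | rewrite rep_ge //; lia].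
apply eq_big => [j|j _]; rewrite E.
  by rewrite mkf_rep eqxx andbT Sf_S ?Tf_S // rep_ge.
by rewrite Df_S ?Pf_S // rep_ge.
Qed.

Lemma bell_N M m k y : (m <= M)%N -> bell m k y = bellN M m k y.
Proof.
elim: M => [|M IH] hm.
  by move: hm; rewrite leqn0 => /eqP ->; rewrite bell_bellN.
case: (leqP m M) => [mM|mM]; first by rewrite IH // bellN_S.
have -> : m = M.+1 by lia.
by rewrite bell_bellN.
Qed.

End Ring.

Lemma rep_addi N (J : {ffun 'I_N -> 'I_N.+1}) i : (i < N)%N -> (rep J i < N)%N ->
  rep (mkf N (addi (rep J) i)) = addi (rep J) i.
Proof.
move=> iN Ji; apply rep_mkf_id => [t _|t tN]; rewrite /addi.
  by case: eqP => [->|_]; [rewrite addn1 | rewrite addn0 rep_le].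
rewrite rep_ge //; case: eqP => // ti; lia.
Qed.

Lemma rep_subi N (J : {ffun 'I_N -> 'I_N.+1}) i :
  rep (mkf N (subi (rep J) i)) = subi (rep J) i.
Proof.
apply rep_mkf_id => [t _|t tN]; first by rewrite /subi (leq_trans (leq_subr _ _) (rep_le _ _)).
by rewrite /subi rep_ge.
Qed.

Section Ring.
Variable R : comPzRingType.
Local Open Scope ring_scope.

Lemma bellN_rec n k (y : nat -> R) : bellN n.+1 n.+1 k.+1 y =
  \sum_(i < n.+1) ('C(n, i))%:R * y i.+1 * bellN n.+1 (n - i)%N k y.
Proof.
rewrite /bellN.
transitivity (\sum_(J : {ffun 'I_n.+1 -> 'I_n.+2} | (Sf n.+1 (rep J) == k.+1) && (Tf n.+1 (rep J) == n.+1))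
   \sum_(i < n.+1) (if (0 < rep J i)%N then (('C(n, i) * ((n - i)`! %/ Df n.+1 (subi (rep J) i)))%N)%:R * Pf n.+1 (rep J) y else 0)).
  apply eq_bigr => J /andP [_ /eqP HT]; rewrite (wid HT) natr_sum mulr_suml.
  by apply eq_bigr => i _; case: ifP => _; rewrite ?mul0r.
rewrite exchange_big /=; apply eq_bigr => i _.
rewrite -big_mkcondr /=.
have iN := ltn_ord i.
rewrite (reindex_onto (fun J' => mkf n.+1 (addi (rep J') i)) (fun J => mkf n.+1 (subi (rep J) i))) /=; last first.
  by move=> J /andP [_ Hi]; rewrite rep_subi addi_subi // mkf_rep.
rewrite mulr_sumr; symmetry; apply eq_big => [J'|J' /andP [_ /eqP HT']].
  symmetry; case: (ltnP (rep J' i) n.+1) => [lt|ge].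
    rewrite rep_addi // subi_addi mkf_rep eqxx andbT Sf_addi // Tf_addi //.
    have -> : (0 < addi (rep J') i i)%N by rewrite /addi eqxx addn1.
    rewrite andbT addn1 eqSS.
    congr (_ && _); apply/eqP/eqP; lia.
  have Hrep: rep J' i = n.+1 by apply/eqP; rewrite eqn_leq rep_le.
  rewrite rep_mkf // /addi eqxx Hrep ifF; last lia.
  rewrite !andbF /=; symmetry; apply/negbTE; rewrite negb_and; apply/orP; right.
  have := Tf_ge (rep J') iN; rewrite Hrep => H; apply/eqP; lia.
have lt : (rep J' i < n.+1)%N by have := Tf_ge (rep J') iN; rewrite HT'; nia.
rewrite rep_addi // subi_addi Pf_addi // natrM; ring.
Qed.

Lemma bell_rec n k (y : nat -> R) : bell n.+1 k.+1 y =
  \sum_(i < n.+1) ('C(n, i))%:R * y i.+1 * bell (n - i)%N k y.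
Proof.
rewrite bell_bellN bellN_rec; apply eq_bigr => i _; rewrite (@bell_N _ n.+1) //.
by rewrite (leq_trans (leq_subr _ _)).
Qed.

End Ring.

Lemma Sf_le_Tf N f : (Sf N f <= Tf N f)%N.
Proof. by apply: leq_sum => t _; rewrite leq_pmull. Qed.

Lemma Sf_ge N f t : (t < N)%N -> (f t <= Sf N f)%N.
Proof. by move=> tN; rewrite /Sf (bigD1 (Ordinal tN)) //= leq_addr. Qed.

Section Ring.
Variable R : comPzRingType.
Local Open Scope ring_scope.

Lemma bell_gt n k (y : nat -> R) : (n < k)%N -> bell n k y = 0.
Proof.
move=> nk; rewrite bell_bellN /bellN big1 // => j /andP [/eqP HS /eqP HT].
have := Sf_le_Tf n (rep j); lia.
Qed.

Lemma bell_S0 n (y : nat -> R) : bell n.+1 0 y = 0.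
Proof.
rewrite bell_bellN /bellN big1 // => j /andP [/eqP HS /eqP HT].
have : Tf n.+1 (rep j) = 0%N.
  apply big1 => t _; have := Sf_ge (rep j) (ltn_ord t); rewrite HS leqn0 => /eqP ->.
  by rewrite muln0.
by rewrite HT.
Qed.

Lemma bell00 (y : nat -> R) : bell 0 0 y = 1.
Proof.
rewrite bell_bellN /bellN (eq_bigl xpredT); last by move=> j; rewrite /Sf /Tf !big_ord0.
rewrite (eq_bigr (fun _ => 1)); last by move=> j _; rewrite /Df /Pf !big_ord0 divn1 mulr1.
by rewrite sumr_const card_ffun !card_ord expn0.
Qed.

Lemma bell_ext n k (y y' : nat -> R) : (forall t, (0 < t <= n)%N -> y t = y' t) ->
  bell n k y = bell n k y'.
Proof.
move=> H; rewrite /bell; apply eq_bigr => j _; congr (_ * _); apply eq_bigr => i _.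
by rewrite H // ltn_ord.
Qed.

Lemma ccomp0 (p q : nat -> R) : ccomp p q 0 = p 0%N.
Proof. by rewrite /ccomp big_ord1 bell00 mulr1. Qed.

Lemma ccomp_wide (p q : nat -> R) m M : (m <= M)%N ->
  ccomp p q m = \sum_(k < M.+1) p k * bell m k q.
Proof.
move=> mM; rewrite /ccomp (big_ord_widen M.+1 (fun k => p k * bell m k q)) // big_mkcond /=.
apply eq_bigr => k _; case: ifP => // /negbT; rewrite -leqNgt => H.
by rewrite bell_gt // mulr0.
Qed.

Lemma ccomp_extq (p q q' : nat -> R) n : (forall t, (0 < t <= n)%N -> q t = q' t) ->
  ccomp p q n = ccomp p q' n.
Proof. by move=> H; apply eq_bigr => k _; rewrite (bell_ext _ H). Qed.

Lemma chain0 (p q : nat -> R) n :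
  ccomp p q n.+1 = hmul (lminus q) (ccomp (lminus p) q) n.
Proof.
rewrite /ccomp -(big_mkord (fun _ => true) (fun k => p k * bell n.+1 k q)) big_nat_recl // bell_S0 mulr0 add0r.
under eq_bigr do rewrite bell_rec mulr_sumr.
rewrite big_mkord exchange_big /hmul; apply eq_bigr => i _.
rewrite -/(ccomp _ _ _) (ccomp_wide _ _ (leq_subr i n)) !mulr_sumr; apply eq_bigr => k _.
rewrite /lminus; ring.
Qed.

End Ring.

Section Ring.
Variable R : comPzRingType.
Local Open Scope ring_scope.
Implicit Types a b c f g p q r x y : nat -> R.

Definition sadd f g : nat -> R := fun n => f n + g n.

Lemma hmulC a b : hmul a b = hmul b a.
Proof.
apply functional_extensionality => n.
rewrite /hmul (reindex_inj rev_ord_inj) /=; apply eq_bigr => j _.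
have jn : (j <= n)%N by rewrite -ltnS ltn_ord.
rewrite subSS bin_sub // subKn //; ring.
Qed.

Lemma hmulDl a b c : hmul (sadd a b) c = sadd (hmul a c) (hmul b c).
Proof.
apply functional_extensionality => n; rewrite /hmul /sadd -big_split /=.
by apply eq_bigr => h _; ring.
Qed.

Lemma hmulDr a b c : hmul a (sadd b c) = sadd (hmul a b) (hmul a c).
Proof. by rewrite hmulC hmulDl !(hmulC a). Qed.

Lemma leibniz a b : lminus (hmul a b) = sadd (hmul (lminus a) b) (hmul a (lminus b)).
Proof.
apply functional_extensionality => n; rewrite /lminus /hmul /sadd.
rewrite big_ord_recl /=.
under eq_bigr do rewrite /bump /= binS natrD !mulrDl.
rewrite big_split /= addrA addrC; congr (_ + _).
rewrite [in RHS]big_ord_recl big_ord_recr /= (bin_small (ltnSn n)) !mul0r addr0.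
rewrite !subn0 !bin0; congr (_ + _); apply eq_bigr => i _.
rewrite /bump /= !add1n -subSn ?subSS //.
Qed.


Lemma hmulA a b c : hmul (hmul a b) c = hmul a (hmul b c).
Proof.
apply functional_extensionality => n; elim: n a b c => [|n IH] a b c.
  by rewrite /hmul !big_ord1 /=; ring.
change (lminus (hmul (hmul a b) c) n = lminus (hmul a (hmul b c)) n).
rewrite !leibniz !hmulDl !hmulDr /sadd !IH; ring.
Qed.

Lemma hmul_hid a : hmul (hid R) a = a.
Proof.
apply functional_extensionality => n; rewrite /hmul big_ord_recl /= big1 ?addr0.
  by rewrite bin0 subn0 /hid /= !mul1r.
by move=> i _; rewrite /hid /bump /= !mulr0 mul0r.
Qed.

Lemma hmul0 a : hmul (fun _ => 0) a = fun _ => 0.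
Proof.
by apply functional_extensionality => n; rewrite /hmul big1 // => i _; rewrite mulr0 mul0r.
Qed.

Lemma hmul_le f f' g n : (forall m, (m <= n)%N -> f m = f' m) -> hmul f g n = hmul f' g n.
Proof. by move=> H; apply eq_bigr => i _; rewrite H // -ltnS ltn_ord. Qed.

Lemma chain p q : lminus (ccomp p q) = hmul (ccomp (lminus p) q) (lminus q).
Proof. by apply functional_extensionality => n; rewrite hmulC; exact: chain0. Qed.

Lemma ccompD x y r : ccomp (sadd x y) r = sadd (ccomp x r) (ccomp y r).
Proof.
apply functional_extensionality => n; rewrite /ccomp /sadd -big_split /=.
by apply eq_bigr => i _; rewrite mulrDl.
Qed.

Lemma ccomp0l q : ccomp (fun _ => 0) q = fun _ => 0.
Proof. by apply functional_extensionality => n; rewrite /ccomp big1 // => i _; rewrite mul0r. Qed.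

Lemma hom_le n : forall m, (m <= n)%N -> forall x y r,
  ccomp (hmul x y) r m = hmul (ccomp x r) (ccomp y r) m.
Proof.
elim: n => [|n IH] m Hm x y r.
  move: Hm; rewrite leqn0 => /eqP ->.
  by rewrite ccomp0 /hmul !big_ord1 !ccomp0.
case: (leqP m n) => [mn|nm]; first exact: IH.
have -> : m = n.+1 by lia.
change (lminus (ccomp (hmul x y) r) n = lminus (hmul (ccomp x r) (ccomp y r)) n).
rewrite (chain (hmul x y) r) leibniz ccompD (hmul_le _ (fun m Hm => (congr2 GRing.add (IH m Hm _ _ _) (IH m Hm _ _ _)))).
rewrite hmulDl leibniz /sadd !chain.
have E1 : hmul (hmul (ccomp (lminus x) r) (ccomp y r)) (lminus r) =
  hmul (hmul (ccomp (lminus x) r) (lminus r)) (ccomp y r) by rewrite !hmulA (hmulC (ccomp y r)).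
by rewrite E1 !hmulA.
Qed.

Lemma hom x y r : ccomp (hmul x y) r = hmul (ccomp x r) (ccomp y r).
Proof. by apply functional_extensionality => n; exact: (@hom_le n). Qed.

Lemma assoc_le q r n : forall m, (m <= n)%N -> forall p,
  ccomp (ccomp p q) r m = ccomp p (ccomp q r) m.
Proof.
elim: n => [|n IH] m Hm p.
  by move: Hm; rewrite leqn0 => /eqP ->; rewrite !ccomp0.
case: (leqP m n) => [mn|nm]; first exact: IH.
have -> : m = n.+1 by lia.
change (lminus (ccomp (ccomp p q) r) n = lminus (ccomp p (ccomp q r)) n).
rewrite !chain hom hmulA; apply hmul_le => m' Hm'; exact: IH.
Qed.

Lemma assoc p q r : ccomp (ccomp p q) r = ccomp p (ccomp q r).
Proof. by apply functional_extensionality => n; exact: (@assoc_le q r n). Qed.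

Lemma lminus_cid : lminus (cid R) = hid R.
Proof. by apply functional_extensionality => n. Qed.

Lemma lminus_hid : lminus (hid R) = fun _ => 0.
Proof. by apply functional_extensionality => n. Qed.

Lemma ccomp_cidr p : ccomp p (cid R) = p.
Proof.
apply functional_extensionality => n; elim: n p => [|n IH] p; first by rewrite ccomp0.
change (lminus (ccomp p (cid R)) n = lminus p n).
by rewrite chain lminus_cid hmulC hmul_hid IH.
Qed.

Lemma ccomp_hid q : ccomp (hid R) q = hid R.
Proof.
apply functional_extensionality => n; case: n => [|n]; first by rewrite ccomp0.
change (lminus (ccomp (hid R) q) n = lminus (hid R) n).
by rewrite chain !lminus_hid ccomp0l hmul0.
Qed.

Lemma ccomp_cidl q : q 0%N = 0 -> ccomp (cid R) q = q.
Proof.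
move=> q0; apply functional_extensionality => n; case: n => [|n]; first by rewrite ccomp0 q0.
change (lminus (ccomp (cid R) q) n = lminus q n).
by rewrite chain lminus_cid ccomp_hid hmul_hid.
Qed.

End Ring.

Section Ring.
Variable R : comPzRingType.
Local Open Scope ring_scope.
Variables (a : nat -> R) (u : R).

Definition Gstep (c : nat -> R) : nat -> R := fun m =>
  if m is n.+1 then u * (hid R n - \sum_(h < n) ('C(n, h.+1))%:R * ccomp a c h.+1 * c (n - h.+1).+1)
  else 0.

Lemma Gstep_contr c c' m : (forall t, (t < m)%N -> c t = c' t) ->
  forall t, (t < m.+1)%N -> Gstep c t = Gstep c' t.
Proof.
move=> H [|s] // Hs; rewrite /=; congr (_ * (_ - _)); apply eq_bigr => h _.
have hs := ltn_ord h.
rewrite (H (s - h.+1).+1); last by lia.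
congr (_ * _ * _); apply ccomp_extq => t Ht; apply H; lia.
Qed.

Definition itG k := iter k Gstep (fun _ => 0).

Lemma itG_S k t : (t < k)%N -> itG k t = itG k.+1 t.
Proof.
elim: k t => [|k IH] t // Ht.
by apply: (Gstep_contr (m := k)) => // s Hs; apply IH.
Qed.

Lemma itG_le k l t : (k <= l)%N -> (t < k)%N -> itG k t = itG l t.
Proof.
elim: l => [|l IH] Hkl Ht; first by lia.
case: (leqP k l) => [kl|lk]; first by rewrite IH // itG_S //; lia.
by have -> : k = l.+1 by lia.
Qed.

Definition cinv := fun t => itG t.+1 t.

Lemma cinv_fix t : cinv t = Gstep cinv t.
Proof.
change (Gstep (itG t) t = Gstep cinv t).
apply: (Gstep_contr (m := t)) => // s Hs.
by rewrite /cinv (itG_le (k := s.+1) (l := t)).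
Qed.

Lemma rinv_ok : u * a 0%N = 1 -> ccomp (lplus0 a) cinv = cid R.
Proof.
move=> Hu; apply functional_extensionality => n; case: n => [|n]; first by rewrite ccomp0.
change (lminus (ccomp (lplus0 a) cinv) n = cid R n.+1).
rewrite chain.
have -> : lminus (lplus0 a) = a by apply functional_extensionality.
rewrite /hmul big_ord_recl /= bin0 ccomp0 /lminus subn0 [cinv n.+1]cinv_fix /=.
rewrite [X in _ + X](_ : _ = \sum_(h < n) ('C(n, h.+1))%:R * ccomp a cinv h.+1 * cinv (n - h.+1).+1) //.
by rewrite mul1r mulrA (mulrC (a 0%N) u) Hu mul1r subrK.
Qed.

End Ring.

Local Open Scope ring_scope.

Lemma rinv (R : comPzRingType) (a : nat -> R) (u : R) : u * a 0%N = 1 ->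
  exists c, c 0%N = 0 /\ ccomp (lplus0 a) c = cid R.
Proof. by move=> Hu; exists (cinv a u); split => //; apply rinv_ok. Qed.

Theorem mainTheorem1 (R : comPzRingType) (a : nat -> R)
    (ha0 : exists u : R, u * a 0%N = 1 /\ a 0%N * u = 1) :
  (exists c : nat -> R, c 0%N = 0 /\
     (forall n, ccomp c (lplus0 a) n = cid R n /\ ccomp (lplus0 a) c n = cid R n)) /\
  (forall c : nat -> R, c 0%N = 0 ->
     (forall n, ccomp c (lplus0 a) n = cid R n /\ ccomp (lplus0 a) c n = cid R n) ->
     forall n, hmul a (ccomp (lminus c) (lplus0 a)) n = hid R n /\
               hmul (ccomp (lminus c) (lplus0 a)) a n = hid R n).
Proof.
case: ha0 => u [Hu1 Hu2].
have Hlb : lminus (lplus0 a) = a by apply functional_extensionality.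
split.
  case: (rinv Hu1) => c [c0 Hbc].
  have Hc1 : a 0%N * c 1%N = 1.
    have H1 : lminus (ccomp (lplus0 a) c) 0%N = cid R 1 by rewrite Hbc.
    move: H1; rewrite chain Hlb /hmul big_ord1 ccomp0 bin0 mul1r /lminus subn0 /cid eqxx.
    by move=> ->.
  case: (@rinv R (lminus c) (a 0%N) Hc1) => e [e0 Hce].
  have Hc : lplus0 (lminus c) = c by apply functional_extensionality => -[|t].
  rewrite Hc in Hce.
  have Hbe : lplus0 a = e.
    by rewrite -[lplus0 a]ccomp_cidr -Hce -assoc Hbc ccomp_cidl.
  exists c; split => // n; rewrite Hbc; split => //.
  by rewrite Hbe Hce.
move=> c c0 H n.
have E : hmul (ccomp (lminus c) (lplus0 a)) a n = hid R n.
  rewrite -{2}Hlb -chain /lminus.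
  by case: (H n.+1) => -> _.
by split; [rewrite hmulC|]; exact E.
Qed.
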